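(* Let $p$ be a prime, $e\ge 1$, and $G$ a finite abelian group of order $p^e$. For a representation $\rho$ of level $k$, let $j_\rho\colon\mathbf{Z}[G]\to\mathbf{Z}[\omega_k]$ be the ring homomorphism induced by $g\mapsto\rho(g)$, where $\omega_k=\exp(2\pi i/p^k)$. If $\rho$ and $\tau$ are not equivalent, then $j_\rho(b_\tau)=0$. Furthermore $j_1(b_1)=p^e$, and $j_\rho(b_\rho)=p^{e-k}(1-\omega)$ if $\rho$ has level $k>0$.
   Context: A representation is a group homomorphism $\rho\colon G\to\mathbf{C}^*$; it has level $k$ if $\rho(G)$ has $p^k$ elements (so $\rho(G)\subset\mathbf{Z}[\omega_k]$). Two representations are equivalent if they have the same kernel. Write $\omega=\exp(2\pi i/p)$. For $\rho$ of level $k>0$ set $b_\rho=\sum_{x\in G,\ \rho(x)=1}x-\sum_{\xi\in G,\ \rho(\xi)=\omega}\xi\in\mathbf{Z}[G]$. For the trivial representation $1$ set $b_1=\sum_{x\in G}x$. *)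

(* Defs.v *)
From HB Require Import structures.
From mathcomp Require Import all_boot all_order all_algebra all_fingroup all_field.
Set Implicit Arguments. Unset Strict Implicit. Unset Printing Implicit Defensive.
Import GRing.Theory Num.Theory.
Local Open Scope ring_scope.

(* exp(2 pi i / n) for n > 0: n.-root (-1) is the n-th root of -1 with minimal *)
(* nonnegative argument, i.e. exp(i pi / n); its square is exp(2 pi i / n).    *)
Definition expi2pi (n : nat) : algC := (n.-root (-1)) ^+ 2.

Definition omega (p : nat) : algC := expi2pi p.

Definition is_rep (gT : finGroupType) (rho : gT -> algC) : Prop :=
  {morph rho : x y / (x * y)%g >-> x * y} /\ (forall x, rho x != 0).

Definition img_card (gT : finGroupType) (rho : gT -> algC) : nat :=
  size (undup [seq rho x | x : gT]).

Definition has_level (p : nat) (gT : finGroupType) (rho : gT -> algC) (k : nat) : Prop :=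
  img_card rho = (p ^ k)%N.

(* equivalent = same kernel *)
Definition rep_equiv (gT : finGroupType) (rho tau : gT -> algC) : Prop :=
  [set x : gT | rho x == 1] = [set x : gT | tau x == 1].

Definition ZG (gT : finGroupType) := {ffun gT -> int}.

Definition jmap (gT : finGroupType) (rho : gT -> algC) (a : ZG gT) : algC :=
  \sum_(x : gT) (a x)%:~R * rho x.

Definition triv_rep (gT : finGroupType) : gT -> algC := fun _ => 1.

Definition bvec (p : nat) (gT : finGroupType) (rho : gT -> algC) : ZG gT :=
  if img_card rho == 1%N then [ffun x => 1%:Z]
  else [ffun x => (rho x == 1)%:Z - (rho x == omega p)%:Z].

(* Main.v *)
Require Import Defs.
From HB Require Import structures.
From mathcomp Require Import all_boot all_order all_algebra all_fingroup all_solvable all_field.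
Import GRing.Theory Num.Theory.
Set Implicit Arguments. Unset Strict Implicit.
Local Open Scope ring_scope.

Section Rep.
Variables (gT : finGroupType) (tau : gT -> algC).
Hypothesis rt : is_rep tau.

Lemma rep1 : tau 1%g = 1.
Proof.
case: rt => M nz; apply: (mulfI (nz 1%g)); by rewrite -M mulg1 mulr1.
Qed.

Lemma repX x n : tau (x ^+ n)%g = tau x ^+ n.
Proof.
elim: n => [|n IH]; first by rewrite expg0 rep1 expr0.
by rewrite expgS (proj1 rt) IH exprS.
Qed.

Lemma rep_card x : tau x ^+ #|gT| = 1.
Proof. by rewrite -repX -cardsT expg_cardG ?inE // rep1. Qed.

Lemma rep_reindex (xi : gT) (P : pred algC) (F : gT -> algC) :
  \sum_(x | P (tau x)) F x = \sum_(x | P (tau xi * tau x)) F (xi * x)%g.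
Proof.
rewrite (reindex_inj (mulgI xi)) /=.
by apply: eq_bigl => x; rewrite (proj1 rt).
Qed.

Lemma rep_reindexn (xi : gT) (P : pred algC) (F : gT -> nat) :
  (\sum_(x | P (tau x)) F x = \sum_(x | P (tau xi * tau x)%R) F (xi * x)%g)%N.
Proof.
rewrite (reindex_inj (mulgI xi)) /=.
by apply: eq_bigl => x; rewrite (proj1 rt).
Qed.
End Rep.

Lemma last_pow (p : nat) (z : algC) n : z ^+ (p ^ n) = 1 -> z != 1 ->
  exists m, z ^+ (p ^ m) != 1 /\ z ^+ (p ^ m.+1) = 1.
Proof.
elim: n => [|n IH]; first by rewrite expn0 expr1 => -> /eqP.
move=> H nz; have [E|E] := eqVneq (z ^+ (p ^ n)) 1; first exact: IH.
by exists n.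
Qed.

Lemma omega_pow (p : nat) (y : algC) : prime p -> y ^+ p = 1 -> y != 1 ->
  exists j, y ^+ j = omega p.
Proof.
move=> pp yp ny.
have p0 : (0 < p)%N by exact: prime_gt0.
have [m pm mdp] := prim_order_exists p0 yp.
have mp : m = p.
  case/primeP: pp => _ /(_ m mdp) /orP[/eqP m1|/eqP //].
  by move: pm; rewrite m1 => /prim_expr_order; rewrite expr1 => /eqP; rewrite (negbTE ny).
rewrite mp in pm.
have wp : omega p ^+ p = 1.
  by rewrite /omega /expi2pi -exprM mulnC exprM rootCK // -signr_odd expr0 ?odd_double //; rewrite -signr_odd.
have [i ->] := prim_rootP pm wp; by exists i.
Qed.

Lemma rep_count (gT : finGroupType) (tau : gT -> algC) : is_rep tau ->
  #|gT| = (img_card tau * \sum_(x | tau x == 1%R) 1)%N.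
Proof.
move=> rt.
set s := undup [seq tau x | x : gT].
have us : uniq s by exact: undup_uniq.
have E1 : forall x : gT, (\sum_(v <- s) (tau x == v) = 1)%N.
  move=> x; have xs : tau x \in s by rewrite mem_undup; apply: map_f; rewrite mem_enum.
  rewrite (bigD1_seq _ xs us) eqxx big1 ?addn0 // => v /negbTE.
  by rewrite eq_sym => ->.
rewrite -sum1_card.
transitivity (\sum_(x : gT) \sum_(v <- s) (tau x == v : nat))%N.
  by apply: eq_bigr => x _; rewrite E1.
rewrite exchange_big /= /img_card -/s.
rewrite -[size s]count_predT -sum1_count /= big_distrl /=.
apply: eq_big_seq => v; rewrite mem_undup => /mapP[g _ ->].
rewrite mul1n -big_mkcond /= (@rep_reindexn _ _ rt g (pred1 (tau g))).
apply: eq_bigl => x /=.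
have nz := proj2 rt g.
by rewrite -{2}(mulr1 (tau g)) (inj_eq (mulfI nz)).
Qed.

Lemma rep_omega (p e : nat) (gT : finGroupType) (tau : gT -> algC) g :
  prime p -> #|gT| = (p ^ e)%N -> is_rep tau -> tau g != 1 ->
  exists n, tau (g ^+ n)%g = omega p.
Proof.
move=> pp cg rt ng.
have := @rep_card _ _ rt g; rewrite cg => H.
have [m [H1 H2]] := @last_pow p (tau g) e H ng.
have [j Hj] : exists j, (tau g ^+ (p ^ m)) ^+ j = omega p.
  by apply: (@omega_pow p _ pp) => //; rewrite -exprM -expnSr.
by exists (p ^ m * j)%N; rewrite (@repX _ _ rt) exprM.
Qed.

Lemma img1_const (gT : finGroupType) (tau : gT -> algC) : is_rep tau ->
  img_card tau = 1%N -> forall x, tau x = 1.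
Proof.
move=> rt; rewrite /img_card.
have m : forall y, tau y \in undup [seq tau x | x : gT].
  by move=> y; rewrite mem_undup; apply: map_f; rewrite mem_enum.
move: (m 1%g) => m1 H x; move: (m x) m1.
case: (undup _) H => [|c [|//]] //= _.
by rewrite !inE (@rep1 _ _ rt) => /eqP -> /eqP.
Qed.

Lemma const_img1 (gT : finGroupType) (tau : gT -> algC) :
  (forall x, tau x = 1) -> img_card tau = 1%N.
Proof.
move=> H; rewrite /img_card; apply/eqP; rewrite eqn_leq; apply/andP; split.
  apply: (@uniq_leq_size _ _ [:: 1]); first exact: undup_uniq.
  by move=> v; rewrite mem_undup => /mapP[x _ ->]; rewrite H inE.
have : 1 \in undup [seq tau x | x : gT].
  by rewrite mem_undup -(H 1%g); apply: map_f; rewrite mem_enum.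
by case: (undup _).
Qed.

Lemma nonconst (gT : finGroupType) (tau : gT -> algC) :
  img_card tau != 1%N -> exists g, tau g != 1.
Proof.
move=> H; case: (boolP [exists g, tau g != 1]) => [/existsP//|].
rewrite negb_exists => /forallP A; exfalso; move/eqP: H; apply.
by apply: const_img1 => x; move: (A x); rewrite negbK => /eqP.
Qed.

Lemma jsplit (gT : finGroupType) (rho tau : gT -> algC) p :
  img_card tau != 1%N -> jmap rho (bvec p tau) =
  \sum_(x | tau x == 1) rho x - \sum_(x | tau x == omega p) rho x.
Proof.
move=> h; rewrite /bvec (negbTE h).
set w := omega p.
rewrite /jmap (big_mkcond (fun x => tau x == 1)) (big_mkcond (fun x => tau x == w)) -sumrB.
apply: eq_bigr => x _; rewrite ffunE.
case: (tau x == 1); case: (tau x == w) => /=;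
  by rewrite intrB ?mulrBl ?mul1r ?mul0r ?subrr ?subr0 ?sub0r.
Qed.

Lemma zero_sum (gT : finGroupType) (rho tau : gT -> algC) y c :
  is_rep rho -> is_rep tau -> tau y = 1 -> rho y != 1 ->
  \sum_(x | tau x == c) rho x = 0.
Proof.
move=> rr rt ty ry.
set S := \sum_(x | tau x == c) rho x.
have E : S = rho y * S.
  rewrite {1}/S (@rep_reindex _ _ rt y (pred1 c) rho) /= ty mulr_sumr.
  by apply: eq_big => x; rewrite ?mul1r // (proj1 rr).
move/eqP: E; rewrite -{1}(mul1r S) -subr_eq0 -mulrBl mulf_eq0 subr_eq0.
by rewrite eq_sym (negbTE ry) => /eqP.
Qed.

Unset Implicit Arguments.
Theorem mainTheorem2 (p e : nat) (gT : finGroupType) :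
  prime p -> (1 <= e)%N -> abelian [set: gT] -> #|gT| = (p ^ e)%N ->
  [/\ (forall rho tau : gT -> algC, is_rep rho -> is_rep tau ->
         ~ rep_equiv rho tau -> jmap rho (bvec p tau) = 0),
      jmap (@triv_rep gT) (bvec p (@triv_rep gT)) = (p ^ e)%:R
    & (forall (rho : gT -> algC) (k : nat), is_rep rho -> has_level p rho k ->
         (0 < k)%N -> jmap rho (bvec p rho) = (p ^ (e - k))%:R * (1 - omega p))].
Proof.
move=> pp e1 _ cg; split.
- move=> rho tau rr rt neq.
  have [/eqP hc|hc] : (img_card tau == 1%N) \/ (img_card tau != 1%N).
    by case: (img_card tau == 1%N); [left|right].
    rewrite /bvec hc eqxx.
    have t1 := img1_const rt hc.
    have [y ry] : exists y, rho y != 1.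
      case: (boolP [exists y, rho y != 1]) => [/existsP//|].
      rewrite negb_exists => /forallP A; exfalso; apply: neq.
      apply/setP => x; rewrite !inE t1 eqxx; move: (A x); by rewrite negbK.
    have := @zero_sum _ rho tau y 1 rr rt (t1 y) ry.
    rewrite /jmap => E; rewrite -[RHS]E; apply: eq_big => x; rewrite ?t1 ?eqxx // => _; by rewrite ffunE /= mul1r.
  rewrite (jsplit rho p hc).
  case: (boolP [exists y, (tau y == 1) && (rho y != 1)]) => [/existsP[y /andP[/eqP ty ry]]|].
    by rewrite !(@zero_sum _ rho tau y _ rr rt ty ry) subrr.
  rewrite negb_exists => /forallP A.
  have K : forall y, tau y = 1 -> rho y = 1.
    by move=> y ty; move: (A y); rewrite ty eqxx /= negbK => /eqP.
  have [h /andP[/eqP rh th]] : exists h, (rho h == 1) && (tau h != 1).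
    case: (boolP [exists h, (rho h == 1) && (tau h != 1)]) => [/existsP//|].
    rewrite negb_exists => /forallP B; exfalso; apply: neq.
    apply/setP => x; rewrite !inE; apply/eqP/eqP; first by move: (B x) => /nandP[/eqP//|]; rewrite negbK => /eqP.
    exact: K.
  have [n tn] := rep_omega pp cg rt th.
  have rn : rho (h ^+ n)%g = 1 by rewrite (@repX _ _ rr) rh expr1n.
  rewrite (@rep_reindex _ _ rt (h ^+ n)%g (pred1 (omega p)) rho) /= tn.
  have w0 : omega p != 0 by rewrite -tn (proj2 rt).
  apply/eqP; rewrite subr_eq0; apply/eqP; apply: eq_big => x.
    by rewrite -{2}(mulr1 (omega p)) (inj_eq (mulfI w0)).
  by move=> _; rewrite (proj1 rr) rn mul1r.
- rewrite /bvec const_img1 // eqxx /jmap.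
  under eq_bigr do rewrite ffunE mul1r /triv_rep.
  by rewrite sumr_const cardT -cardE cg.
- move=> rho k rr hl k0.
  have p1 : (1 < p)%N by exact: prime_gt1.
  have hk : img_card rho != 1%N.
    by rewrite hl -(expn0 p) (inj_eq (expnI p1)) -lt0n.
  rewrite (jsplit rho p hk).
  have [g ng] := nonconst hk.
  have [n tn] := rep_omega pp cg rr ng.
  rewrite (@rep_reindex _ _ rr (g ^+ n)%g (pred1 (omega p)) rho) /= tn.
  have w0 : omega p != 0 by rewrite -tn (proj2 rr).
  have -> : \sum_(i | omega p * rho i == omega p) rho (g ^+ n * i)%g =
            omega p * \sum_(x | rho x == 1) rho x.
    rewrite mulr_sumr; apply: eq_big => x.
      by rewrite -{2}(mulr1 (omega p)) (inj_eq (mulfI w0)).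
    by move=> _; rewrite (proj1 rr) tn.
  have -> : \sum_(x | rho x == 1) rho x = (\sum_(x | rho x == 1%R) 1%N)%:R.
    by rewrite natr_sum; apply: eq_bigr => x /eqP.
  have cnt := rep_count rr; rewrite cg hl in cnt.
  set c := (\sum_(x | rho x == 1%R) 1)%N in cnt *.
  have ke : (k <= e)%N.
    by rewrite -(dvdn_Pexp2l _ _ p1) cnt dvdn_mulr.
  have -> : c = (p ^ (e - k))%N.
    have pk : (0 < p ^ k)%N by rewrite expn_gt0 prime_gt0.
    by apply/eqP; rewrite -(eqn_pmul2l pk) -expnD subnKC // -cnt.
  by rewrite mulrBr mulr1 mulrC.
Qed.
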